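(* Let $G$ be a directed graph on $n$ vertices, $l\ge 1$ an integer, and $w$ a weight function such that $G_w$ is min-unique for paths of length at most $l$. Then for every pair of vertices $u,v$, $|\mathcal{P}^{2l}_w(u,v)| \le n$. Consequently, the total number of paths in $\bigcup_{u,v}\mathcal{P}^{2l}_w(u,v)$ is at most $n^3$.
   Context: A weight function on a directed graph $G=(V,E)$ is a map $w:E\to\mathbb{N}_{>0}$. $G_w$ denotes $G$ weighted by $w$; the weight $w(P)$ of a path $P$ is the sum of the weights of its edges, and the length $\mathrm{len}(P)$ is its number of edges. For vertices $u,v$ and integer $i\ge 0$, let $\mathcal{P}^i_w(u,v)$ be the set of paths from $u$ to $v$ of length at most $i$ that have minimum weight among all paths from $u$ to $v$ of length at most $i$. $G_w$ is min-unique for paths of length at most $i$ if $|\mathcal{P}^i_w(u,v)|\le 1$ for every pair of vertices $u,v$. *)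

(* Defs.v *)
From mathcomp Require Import all_boot.
Set Implicit Arguments. Unset Strict Implicit. Unset Printing Implicit Defensive.

(* A weight function is w : V -> V -> nat, required positive on edges
   (its values on non-edges are irrelevant).
   A path is represented by its full vertex sequence [:: x0; x1; ...; xk]
   (k = its length = number of edges), with consecutive vertices joined by
   edges and no repeated vertex (simple path). *)

Definition is_path (V : eqType) (E : rel V) (u v : V) (q : seq V) : bool :=
  match q with
  | [::] => false
  | x :: t => [&& x == u, path E x t, last x t == v & uniq q]
  end.

Definition plen (V : Type) (q : seq V) : nat := (size q).-1.

Fixpoint wt_from (V : Type) (w : V -> V -> nat) (x : V) (t : seq V) : nat :=
  match t with
  | [::] => 0
  | y :: t' => w x y + wt_from w y t'
  end.

Definition pweight (V : Type) (w : V -> V -> nat) (q : seq V) : nat :=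
  match q with
  | [::] => 0
  | x :: t => wt_from w x t
  end.

Definition minpath (V : eqType) (E : rel V) (w : V -> V -> nat) (i : nat)
    (u v : V) (q : seq V) : Prop :=
  [/\ is_path E u v q, plen q <= i &
      forall q', is_path E u v q' -> plen q' <= i -> pweight w q <= pweight w q'].

Definition min_unique (V : eqType) (E : rel V) (w : V -> V -> nat) (i : nat) : Prop :=
  forall u v q1 q2, minpath E w i u v q1 -> minpath E w i u v q2 -> q1 = q2.

(* |S| <= k for a (possibly infinite a priori) set S of vertex sequences:
   every duplicate-free list of members of S has at most k entries. *)
Definition card_le (V : eqType) (S : seq V -> Prop) (k : nat) : Prop :=
  forall s : seq (seq V), uniq s -> (forall q, q \in s -> S q) -> size s <= k.

(* Main.v *)
Require Import Defs.
From mathcomp Require Import all_boot.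
From mathcomp Require Import zify.

Section Helpers.
Variables (V : finType) (E : rel V) (w : V -> V -> nat).

Lemma wt_from_cat x p q :
  wt_from w x (p ++ q) = wt_from w x p + wt_from w (last x p) q.
Proof.
elim: p x => [|y p IH] x //=; rewrite IH; lia.
Qed.

Lemma shortcut t x : path E x t -> exists t',
  [/\ path E x t', uniq (x :: t'), last x t' = last x t,
      size t' <= size t & wt_from w x t' <= wt_from w x t].
Proof.
elim: t x => [|y t0 IH] x.
  by move=> _; exists [::].
move=> /= /andP [Exy p0].
have [t1 [p1 u1 l1 s1 w1]] := IH y p0.
case: (x =P y) => [exy | nxy].
  subst y; exists t1; split => //; [lia|lia].
case xin: (x \in t1).
  case/splitPr: xin p1 u1 l1 s1 w1 => p2 p3 p1 u1 l1 s1 w1.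
  exists p3; split.
  - by move: p1; rewrite cat_path /= => /and3P [].
  - move: u1; rewrite -cat_cons cat_uniq => /and3P [] //.
  - by rewrite -l1 last_cat.
  - move: s1; rewrite size_cat /=; lia.
  - move: w1; rewrite wt_from_cat /=; lia.
exists (y :: t1); split => //=.
- by rewrite Exy.
- rewrite in_cons xin orbF; apply/andP; split => //; exact/eqP.
- lia.
Qed.

Variable l : nat.

Lemma better u v x t t2 i : minpath E w i u v (x :: t) ->
  path E u t2 -> last u t2 = v -> size t2 <= i ->
  wt_from w u t <= wt_from w u t2.
Proof.
case=> /= /and4P [/eqP xu _ _ _] _ mn p2 l2 s2.
subst x.
have [t' [p' u' l' s' w']] := @shortcut t2 u p2.
have : pweight w (u :: t) <= pweight w (u :: t').
  apply: mn; last by rewrite /plen /=; lia.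
  by rewrite /is_path eqxx p' u' l' l2 eqxx.
rewrite /=; lia.
Qed.

Lemma decomp u v x t k : minpath E w (2 * l) u v (x :: t) ->
  k <= l -> k <= size t -> size t - k <= l ->
  minpath E w l u (last x (take k t)) (x :: take k t) /\
  minpath E w l (last x (take k t)) v (last x (take k t) :: drop k t).
Proof.
move=> mp kl kt sd0.
have [m em] : exists m, m = last x (take k t) by eexists.
rewrite -em.
have mp0 := mp.
case: mp => /= /and4P [/eqP xu pt /eqP lt ut] pl mn.
have tk : t = take k t ++ drop k t by rewrite cat_take_drop.
have sd : size (drop k t) <= l by rewrite size_drop.
have sk : size (take k t) = k by rewrite size_takel.
have : path E x (take k t ++ drop k t) by rewrite -tk.
rewrite cat_path -em => /andP [pta ptb].
have wsplit : wt_from w x t = wt_from w x (take k t) + wt_from w m (drop k t).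
  by rewrite {1}tk wt_from_cat em.
split.
  split.
  - rewrite /= pta em xu !eqxx /=; rewrite -xu; exact: (take_uniq k.+1 (ut : uniq (x :: t))).
  - by rewrite /plen /= sk.
  move=> [|y t'] //= /and4P [/eqP yu pt' /eqP lt' _] pl'.
  rewrite /pweight.
  have := @better u v x t (t' ++ drop k t) (2 * l) mp0.
  subst y; subst x.
  move=> H; have := H.
  rewrite cat_path pt' lt' ptb last_cat lt' em -last_cat -tk lt size_cat.
  move: pl'; rewrite /plen /= => pl'.
  move=> /(_ erefl erefl) {}H.
  have := H; rewrite mul2n -addnn leq_add // => /(_ isT).
  rewrite wt_from_cat lt' wsplit; by rewrite leq_add2r.
split.
- rewrite /= eqxx ptb em -last_cat -tk lt eqxx /=.
  have ut2 : uniq ((x :: take k t) ++ drop k t) by rewrite cat_cons -tk.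
  move: ut2; rewrite cat_uniq => /and3P [_ hh ->]; rewrite andbT.
  apply: contra hh => md; apply/hasP; exists (last x (take k t)) => //.
  exact: mem_last.
- by rewrite /plen /=.
move=> [|y t'] //= /and4P [/eqP ym pt' /eqP lt' _] pl'.
rewrite /pweight.
have := @better u v x t (take k t ++ t') (2 * l) mp0.
rewrite cat_path -xu pta /= -em -ym pt' last_cat -em -ym lt' size_cat sk.
move: pl'; rewrite /plen /= => pl'.
move=> /(_ erefl erefl) H.
have := H; rewrite mul2n -addnn leq_add // => /(_ isT).
by rewrite wt_from_cat -em -ym wsplit ym leq_add2l.
Qed.

End Helpers.

Definition midv (V : Type) (l : nat) (d : V) (q : seq V) : V :=
  match q with [::] => d | x :: t => last x (take (minn l (size t)) t) end.

Arguments midv {V}.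

Lemma aux_bounds l n : n <= 2 * l ->
  [/\ minn l n <= l, minn l n <= n & n - minn l n <= l].
Proof. move=> h; split; lia. Qed.

Lemma core (V : finType) (E : rel V) (w : V -> V -> nat) (l : nat) (d : V) :
  min_unique E w l -> forall u v q1 q2,
  minpath E w (2 * l) u v q1 -> minpath E w (2 * l) u v q2 ->
  midv l d q1 = midv l d q2 -> q1 = q2.
Proof.
move=> mu u v [|x1 t1]; first by move=> q2 [h _ _]; discriminate h.
move=> [|x2 t2]; first by move=> _ [h _ _]; discriminate h.
move=> mp1 mp2 /= em.
have [a1 b1 c1] : [/\ minn l (size t1) <= l, minn l (size t1) <= size t1
   & size t1 - minn l (size t1) <= l] by apply: aux_bounds; case: mp1.
have [a2 b2 c2] : [/\ minn l (size t2) <= l, minn l (size t2) <= size t2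
   & size t2 - minn l (size t2) <= l] by apply: aux_bounds; case: mp2.
have [p1 s1] := @decomp _ _ _ _ _ _ _ _ _ mp1 a1 b1 c1.
have [p2 s2] := @decomp _ _ _ _ _ _ _ _ _ mp2 a2 b2 c2.
rewrite em in p1 s1.
have := mu _ _ _ _ p1 p2 => -[-> ep].
have := mu _ _ _ _ s1 s2 => -[ed].
by rewrite -(cat_take_drop (minn l (size t1)) t1) ep ed cat_take_drop.
Qed.

Theorem lemma5 (V : finType) (E : rel V) (w : V -> V -> nat) (l : nat) :
  (forall x y, E x y -> 0 < w x y) ->
  0 < l ->
  min_unique E w l ->
  (forall u v : V, card_le (minpath E w (2 * l) u v) #|V|) /\
  card_le (fun q => exists u v : V, minpath E w (2 * l) u v q) (#|V| ^ 3).
Proof.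
move=> _ _ mu; split.
  move=> u v s us hs.
  have inj : {in s &, injective (midv l u)}.
    move=> q1 q2 h1 h2; exact: (@core _ _ _ _ u mu u v _ _ (hs _ h1) (hs _ h2)).
  rewrite -(size_map (midv l u)) -(card_uniqP (etrans (map_inj_in_uniq inj) us)).
  exact: max_card.
move=> [//|q0 s'] us hs.
have [d _] := hs q0 (mem_head _ _).
pose f (q : seq V) : V * V * V := (head d q, last d q, midv l d q).
have inj : {in q0 :: s' &, injective f}.
  move=> q1 q2 h1 h2 /= [eh el em].
  have [u1 [v1 m1]] := hs _ h1.
  have [u2 [v2 m2]] := hs _ h2.
  have hu : forall u v q, minpath E w (2 * l) u v q -> head d q = u /\ last d q = v.
    by move=> u v [|x t] [] //= /and4P [/eqP -> _ /eqP -> _].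
  have [hu1 hv1] := hu _ _ _ m1.
  have [hu2 hv2] := hu _ _ _ m2.
  have e1 : u1 = u2 by rewrite -hu1 -hu2.
  have e2 : v1 = v2 by rewrite -hv1 -hv2.
  subst u2 v2; rewrite -e1 -e2 in m2; exact: (@core _ _ _ _ d mu _ _ _ _ m1 m2 em).
rewrite -(size_map f) -(card_uniqP (etrans (map_inj_in_uniq inj) us)).
apply: leq_trans (max_card _) _.
by rewrite !card_prod expnS expnS expn1 mulnA.
Qed.
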